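(* Let $(G=(V,E),k,p)$ be an instance of Max $(k,n-k)$-Cut, write $V=\{v_1,\dots,v_{|V|}\}$, and let $\mathcal{F}$ be a $(|V|,k+p)$-universal set. For each $f\in\mathcal{F}$ let $G_f$ be a copy of $G$ in which the copy of $v_i$ is colored red if $f(i)=0$ and blue if $f(i)=1$. Then $(G,k,p)$ is a yes-instance of Max $(k,n-k)$-Cut if and only if at least one of the instances $(G_f,k,p)$, $f\in\mathcal{F}$, is a yes-instance of NC-Max $(k,n-k)$-Cut.
   Context: Graphs are finite, simple and undirected; $E(X,V\setminus X)$ denotes the set of edges with exactly one endpoint in $X$. Max $(k,n-k)$-Cut: given $G=(V,E)$ and positive integers $k,p$, decide whether there is $X\subseteq V$ with $|X|=k$ and $|E(X,V\setminus X)|\ge p$. NC-Max $(k,n-k)$-Cut: given a graph $G=(V,E)$ each of whose nodes is colored red or blue, and positive integers $k,p$, decide whether there is $X\subseteq V$ consisting of exactly $k$ red nodes and no blue nodes such that at least $p$ edges of $E(X,V\setminus X)$ have a blue endpoint. A set $\mathcal{F}$ of functions $\{1,\dots,n\}\to\{0,1\}$ is an $(n,t)$-universal set if for every $I\subseteq\{1,\dots,n\}$ with $|I|\le t$ and every $f':I\to\{0,1\}$ there is $f\in\mathcal{F}$ with $f(i)=f'(i)$ for all $i\in I$. *)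

(* Defs.v *)
From mathcomp Require Import all_boot.
Set Implicit Arguments. Unset Strict Implicit. Unset Printing Implicit Defensive.

(* A finite simple graph on vertex set 'I_n (v_{i+1} <-> i) given by a
   symmetric irreflexive adjacency relation. *)
Definition simple_graph (n : nat) (e : rel 'I_n) : Prop :=
  symmetric e /\ irreflexive e.

(* E(X, V\X) : edges with exactly one endpoint in X; each such edge is
   represented uniquely by the ordered pair (x, y) with x in X, y notin X. *)
Definition cut_edges n (e : rel 'I_n) (X : {set 'I_n}) : {set 'I_n * 'I_n} :=
  [set xy | [&& xy.1 \in X, xy.2 \notin X & e xy.1 xy.2]].

Definition maxcut_yes n (e : rel 'I_n) (k p : nat) : Prop :=
  exists X : {set 'I_n}, #|X| = k /\ p <= #|cut_edges e X|.

(* Colouring: blue c = true means blue, false means red. *)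
Definition nc_maxcut_yes n (e : rel 'I_n) (blue : 'I_n -> bool) (k p : nat) : Prop :=
  exists X : {set 'I_n},
    [/\ #|X| = k, (forall x, x \in X -> ~~ blue x) &
      p <= #|[set xy in cut_edges e X | blue xy.1 || blue xy.2]| ].

(* (n,t)-universal set of functions {1..n} -> {0,1}, encoded as 'I_n -> bool
   (false = 0, true = 1). *)
Definition universal_set n t (F : seq {ffun 'I_n -> bool}) : Prop :=
  forall (I : {set 'I_n}) (f' : 'I_n -> bool), #|I| <= t ->
    exists2 f, f \in F & forall i, i \in I -> f i = f' i.

(* Main.v *)
Require Import Defs.
From mathcomp Require Import all_boot.

Theorem lemma7 (n : nat) (e : rel 'I_n) (k p : nat)
    (F : seq {ffun 'I_n -> bool}) :
  simple_graph e -> 0 < k -> 0 < p ->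
  universal_set (k + p) F ->
  (maxcut_yes e k p <->
   exists2 f, f \in F & nc_maxcut_yes e (fun i => f i) k p).
Proof.
move=> _ _ _ HU; split; last first.
  move=> [f _ [X [HX _ Hp]]]; exists X; split => //.
  apply: (leq_trans Hp); apply: subset_leq_card; apply/subsetP => xy.
  by rewrite inE => /andP[].
move=> [X [HX Hp]].
have [s [us ss sub]] := card_geqP Hp.
set C := [set xy in s].
have HC : #|C| = p by rewrite cardsE (card_uniqP us).
set Y := [set xy.2 | xy in C].
have HI : #|X :|: Y| <= k + p.
  rewrite cardsU; apply: (leq_trans (leq_subr _ _)); rewrite HX leq_add2l -HC.
  exact: leq_imset_card.
have [f fF Hf] := HU (X :|: Y) (fun i => i \notin X) HI.
exists f => //; exists X; split => //.
  by move=> x xX; rewrite Hf ?inE ?xX //; rewrite negbK.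
rewrite -HC; apply: subset_leq_card; apply/subsetP => xy xyC.
have xyc : xy \in cut_edges e X by apply: sub; rewrite inE in xyC.
rewrite inE xyc /=; apply/orP; right.
move: xyc; rewrite inE => /and3P[_ H2 _].
rewrite Hf //; apply/setUP; right; apply/imsetP; by exists xy.
Qed.
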